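(* Let $g,h$ be non-identical linear functions. Then (i) $h\circ g<g\circ h$ if and only if $\theta(h)-\theta(g)\in(0,\pi)_{2\pi}$; and (ii) $h\circ g=g\circ h$ if and only if $\theta(h)-\theta(g)\in\{0,\pi\}_{2\pi}$.
   Context: A linear function is $f(x)=ax+b$, $a,b\in\mathbb{R}$; it is identical if $f(x)=x$. The vector of $f$ is $\vec f=(b,1-a)^\top$ and $\theta(f)\in[0,2\pi)$ is its polar angle ($\theta(f)=\bot$ if $\vec f=0$). For $\theta_1,\theta_2$, $\theta_1=_{2\pi}\theta_2$ means $\theta_1-\theta_2\in2\pi\mathbb{Z}$; $[\theta_1,\theta_2]_{2\pi}=\{\theta\in[\lambda_1,\lambda_2]\mid\lambda_1=_{2\pi}\theta_1,\lambda_2=_{2\pi}\theta_2,\lambda_2-\lambda_1\in[0,2\pi)\}$ with open/half-open analogues, and for a set $S$, $S_{2\pi}=\{\theta\mid\theta=_{2\pi}\lambda\text{ for some }\lambda\in S\}$. For functions, $g<h$ means $g(x)<h(x)$ for all $x$. *)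

(* Defs.v *)
From Stdlib Require Import Reals.
Open Scope R_scope.

Definition lin (a b : R) : R -> R := fun x => a * x + b.

Definition identical (f : R -> R) : Prop := forall x, f x = x.

Definition linvec (a b : R) : R * R := (b, 1 - a).

Definition is_polar_angle (v : R * R) (t : R) : Prop :=
  v <> (0, 0) /\ 0 <= t < 2 * PI /\
  fst v = sqrt (fst v ^ 2 + snd v ^ 2) * cos t /\
  snd v = sqrt (fst v ^ 2 + snd v ^ 2) * sin t.

Definition in_mod2pi (S : R -> Prop) (x : R) : Prop :=
  exists k : Z, S (x + 2 * IZR k * PI).

Definition fun_lt (g h : R -> R) : Prop := forall x, g x < h x.

(* Main.v *)
Require Import Defs.
From Stdlib Require Import Reals Lra Lia.
Open Scope R_scope.

Lemma shift_sin (d y : R) (k : Z) : -2*PI < d < 2*PI -> 0 <= y <= PI ->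
  d + 2 * IZR k * PI = y -> sin d = sin y.
Proof.
  intros Hd Hy E. pose proof PI_RGT_0 as P.
  assert (k0 : (0 <= k)%Z).
  { assert (IZR k > -1).
    { apply Rmult_lt_reg_r with PI; [lra|]. nra. }
    apply lt_IZR in H. lia. }
  assert (k1 : (k <= 1)%Z).
  { assert (IZR k < 2).
    { apply Rmult_lt_reg_r with PI; [lra|]. nra. }
    apply lt_IZR in H. lia. }
  assert (k = 0%Z \/ k = 1%Z) as [->| ->] by lia.
  - simpl in E. replace d with y by lra. reflexivity.
  - simpl in E. replace d with (y - 2*PI) by lra.
    rewrite sin_minus, sin_2PI, cos_2PI. ring.
Qed.

Lemma sin_pos_iff (d : R) : -2*PI < d < 2*PI ->
  (0 < sin d <-> in_mod2pi (fun y => 0 < y < PI) d).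
Proof.
  intros Hd. pose proof PI_RGT_0 as P. split.
  - intros Hs.
    destruct (Rlt_or_le d 0) as [Hn|Hn].
    + destruct (Rle_or_lt d (-PI)) as [H1|H1].
      * exists 1%Z. change (IZR 1) with 1.
        destruct (Req_dec d (-PI)) as [E|E].
        { subst. rewrite sin_neg, sin_PI in Hs. lra. }
        split; [lra|].
        destruct (Rlt_or_le (d + 2*1*PI) PI) as [|H2]; [lra|].
        exfalso. assert (sin d = sin (d + 2*PI)).
        { rewrite sin_plus, sin_2PI, cos_2PI. ring. }
        assert (sin (d + 2*PI) <= 0); [|lra].
        destruct (Req_dec (d + 2*PI) PI) as [E2|E2].
        { rewrite E2, sin_PI. lra. }
        left. apply sin_lt_0; lra.
      * pose proof (sin_lt_0_var d H1 Hn). lra.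
    + destruct (Rlt_or_le d PI) as [H1|H1].
      * exists 0%Z. simpl. split; [|lra].
        destruct (Req_dec d 0) as [E|E]; [subst; rewrite sin_0 in Hs; lra|lra].
      * destruct (Req_dec d PI) as [E|E]; [subst; rewrite sin_PI in Hs; lra|].
        pose proof (sin_lt_0 d ltac:(lra) ltac:(lra)). lra.
  - intros [k Hk]. rewrite (shift_sin d (d + 2 * IZR k * PI) k); auto; try lra.
    apply sin_gt_0; lra.
Qed.

Lemma sin_zero_iff (d : R) : -2*PI < d < 2*PI ->
  (sin d = 0 <-> in_mod2pi (fun y => y = 0 \/ y = PI) d).
Proof.
  intros Hd. pose proof PI_RGT_0 as P. split.
  - intros Hs.
    destruct (Rtotal_order d 0) as [Hn|[Hn|Hn]].
    + destruct (Rtotal_order d (-PI)) as [H1|[H1|H1]].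
      * assert (sin d = sin (d + 2*PI)).
        { rewrite sin_plus, sin_2PI, cos_2PI. ring. }
        pose proof (sin_gt_0 (d + 2*PI) ltac:(lra) ltac:(lra)). lra.
      * exists 1%Z. right. change (IZR 1) with 1. lra.
      * pose proof (sin_lt_0_var d H1 Hn). lra.
    + exists 0%Z. left. simpl. lra.
    + destruct (Rtotal_order d PI) as [H1|[H1|H1]].
      * pose proof (sin_gt_0 d Hn H1). lra.
      * exists 0%Z. right. simpl. lra.
      * pose proof (sin_lt_0 d H1 ltac:(lra)). lra.
  - intros [k Hk]. rewrite (shift_sin d (d + 2 * IZR k * PI) k); auto; try lra.
    destruct Hk as [E|E]; rewrite E; [apply sin_0|apply sin_PI].
Qed.

Lemma rad_pos (v : R * R) : v <> (0,0) -> 0 < sqrt (fst v ^ 2 + snd v ^ 2).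
Proof.
  destruct v as [b c]; simpl. intros H. apply sqrt_lt_R0.
  destruct (Req_dec b 0); destruct (Req_dec c 0); subst; try (exfalso; auto; fail); nra.
Qed.

Theorem mainTheorem6 (ag bg ah bh tg th : R) :
  ~ identical (lin ag bg) -> ~ identical (lin ah bh) ->
  is_polar_angle (linvec ag bg) tg -> is_polar_angle (linvec ah bh) th ->
  (fun_lt (fun x => lin ah bh (lin ag bg x)) (fun x => lin ag bg (lin ah bh x))
     <-> in_mod2pi (fun y => 0 < y < PI) (th - tg)) /\
  ((forall x, lin ah bh (lin ag bg x) = lin ag bg (lin ah bh x))
     <-> in_mod2pi (fun y => y = 0 \/ y = PI) (th - tg)).
Proof.
  intros _ _ [Ng [Tg [Bg Cg]]] [Nh [Th [Bh Ch]]].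
  pose proof (rad_pos _ Ng) as Rg. pose proof (rad_pos _ Nh) as Rh.
  unfold linvec in *; cbn [fst snd] in *.
  remember (sqrt (bg ^ 2 + (1 - ag) ^ 2)) as rg eqn:Erg.
  remember (sqrt (bh ^ 2 + (1 - ah) ^ 2)) as rh eqn:Erh.
  clear Erg Erh.
  assert (Cross : bg * (1 - ah) - bh * (1 - ag) = rg * rh * sin (th - tg)).
  { rewrite sin_minus. nra. }
  assert (D : -2*PI < th - tg < 2*PI) by lra.
  unfold lin. split.
  - rewrite <- sin_pos_iff by exact D. split.
    + intros H. specialize (H 0).
      assert (0 < rg * rh * sin (th - tg)) by lra.
      destruct (Rle_or_lt (sin (th - tg)) 0); [|auto].
      assert (0 < rg * rh) by nra. nra.
    + intros H x. assert (0 < rg * rh * sin (th - tg)).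
      { apply Rmult_lt_0_compat; [nra|auto]. }
      nra.
  - rewrite <- sin_zero_iff by exact D. split.
    + intros H. specialize (H 0).
      assert (rg * rh * sin (th - tg) = 0) by lra.
      apply Rmult_integral in H0 as [H0|H0]; auto. nra.
    + intros H x. assert (rg * rh * sin (th - tg) = 0) by (rewrite H; ring). nra.
Qed.
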